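(* Let $S=\{a_i \bmod d_i : 1\le i\le r\}$ be an exact covering system and $G_S$ its exact covering system digraph, with predecessor function $P$. Then for every $n\in\mathbb{Z}$ there is an ancestor $m$ of $n$ such that $|P(m)|\ge |m|$. Moreover, if the degree $r$ of $G_S$ is at least $2$, there exists $N\in\mathbb{N}$ such that for every $m\in\mathbb{Z}$ with $|P(m)|\ge|m|$ we have $|m|\le N$.
   Context: A system of congruences $S=\{a_i \bmod d_i : 1\le i\le r\}$ with integers $a_i$ and nonzero integers $d_i$ (negative $d_i$ allowed; $n\equiv a \bmod -d$ means $n\equiv a\bmod d$) is an exact covering system if every integer satisfies exactly one of the congruences; congruences are distinguished by their chosen representatives $a_i$. The exact covering system digraph $G_S$ has vertex set $\mathbb{Z}$ and edges $(n,d_in+a_i)$ for all $n\in\mathbb{Z}$, $1\le i\le r$; $r$ is its degree. Every vertex has indegree exactly one, and the predecessor $P(n)$ is the unique integer with $(P(n),n)$ an edge. $P^k$ denotes the $k$-fold composition; $m$ is an ancestor of $n$ if $m=P^k(n)$ for some $k\in\mathbb{N}$. *)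

(* Defs.v *)
From mathcomp Require Import all_boot all_order all_algebra.
Set Implicit Arguments. Unset Strict Implicit. Unset Printing Implicit Defensive.
Import Order.TTheory GRing.Theory Num.Theory.
Local Open Scope ring_scope.

(* A system of congruences: a finite list of pairs (a_i, d_i) : int * int,
   meaning n = a_i (mod d_i).  Congruences are indexed by their position. *)
Definition congr_system := seq (int * int).

Definition satisfies (c : int * int) (n : int) : bool := (c.2 %| n - c.1)%Z.

Definition exact_covering (S : congr_system) : Prop :=
  all (fun c => c.2 != 0) S /\
  forall n : int, count (fun c => satisfies c n) S = 1%N.

Definition degree (S : congr_system) : nat := size S.

Definition edge (S : congr_system) (m n : int) : Prop :=
  exists2 c, c \in S & n = c.2 * m + c.1.

(* P is the predecessor function of G_S: (P n, n) is an edge for every n.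
   (Indegree is exactly one for an exact covering system, so P is unique.) *)
Definition is_predecessor (S : congr_system) (P : int -> int) : Prop :=
  forall n : int, edge S (P n) n.

Definition ancestor (P : int -> int) (m n : int) : Prop :=
  exists k : nat, m = iter k P n.

(* Main.v *)
Require Import Defs.
From mathcomp Require Import all_boot all_order all_algebra zify.
Import Order.TTheory GRing.Theory Num.Theory.
Local Open Scope ring_scope.

Lemma anc_ex (P : int -> int) (n : int) : exists m : int, ancestor P m n /\ `|m| <= `|P m|.
Proof.
move: {2}`|n|%N (leqnn `|n|%N) => k; elim: k n => [|k IH] n Hn.
  exists n; split; first by exists 0%N.
  have -> : n = 0 by apply/eqP; rewrite -absz_eq0 -leqn0.
  by rewrite normr0 normr_ge0.
case: (leP `|n| `|P n|) => h.
  by exists n; split; first by exists 0%N.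
have [m [[j Hj] Hm]] : exists m : int, ancestor P m (P n) /\ `|m| <= `|P m|.
  apply: IH; move: h Hn; rewrite -!abszE; lia.
by exists m; split=> //; exists j.+1; rewrite Hj iterSr.
Qed.

Lemma le_sum (S : congr_system) c : c \in S -> (`|c.1| <= sumn (map (fun c : int * int => `|c.1|%N) S))%N.
Proof.
elim: S => //= x s IH; rewrite in_cons => /orP [/eqP -> | /IH]; lia.
Qed.

Lemma d_ge2 (S : congr_system) c : exact_covering S -> (2 <= size S)%N -> c \in S -> (2 <= `|c.2|)%N.
Proof.
move=> [nz cov] sz cS.
have c0 : c.2 != 0 by move/allP: nz => /(_ c cS).
case: (ltnP 1 `|c.2|%N) => // h.
have h1 : `|c.2|%N = 1%N by move: c0; rewrite -absz_eq0; lia.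
case/splitPr: cS sz cov => s1 s2 sz cov.
have [c' c'in] : exists c', c' \in s1 ++ s2.
  move: sz; rewrite size_cat /=; case E: (s1 ++ s2) => [|c' s].
    move/eqP: E; rewrite -size_eq0 size_cat => /eqP E2; by rewrite addnS E2.
  by move=> _; exists c'; rewrite mem_head.
move: c'in; case: c' => a' d' c'in /=.
have := cov a'; rewrite count_cat /=.
have -> : satisfies c a' by rewrite /satisfies dvdzE h1 dvd1n.
have : (0 < count (satisfies^~ a') (s1 ++ s2))%N.
  rewrite -has_count; apply/hasP; exists (a', d') => //.
  by rewrite /satisfies subrr dvdz0.
rewrite count_cat; lia.
Qed.

Theorem mainTheorem4 (S : congr_system) (P : int -> int) :
  exact_covering S -> is_predecessor S P ->
  (forall n : int, exists m : int, ancestor P m n /\ `|m| <= `|P m|) /\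
  ((2 <= degree S)%N ->
     exists N : nat, forall m : int, `|m| <= `|P m| -> `|m| <= N%:Z).
Proof.
move=> ec hP; split; first exact: anc_ex.
move=> sz; exists (sumn (map (fun c : int * int => `|c.1|%N) S)) => m hm.
have [[a d] cS /= Em] := hP m.
have d2 := @d_ge2 S _ ec sz cS; have la := @le_sum S _ cS; rewrite /= in d2 la.
have h1 : `|d * P m| <= `|m| + `|a|.
  have -> : d * P m = m - a by rewrite [in RHS]Em addrK.
  exact: ler_normB.
rewrite normrM in h1.
have h2 : 2 * `|P m| <= `|d| * `|P m|.
  apply: ler_wpM2r => //; rewrite -abszE; by rewrite lez_nat.
move: h1 h2 hm la; rewrite -!abszE; lia.
Qed.
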